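(* Let $0\le z<t\le n$ and consider any $((t,n;z))_q$ QSS scheme whose secret consists of $m$ qudits. Then for every authorized set $A\subseteq[n]$, the communication cost of secret recovery from $A$ satisfies $$\mathrm{CC}_n(A)\geq\frac{|A|\,m}{|A|-z}.$$
   Context: A QSS scheme on $n$ parties is an encoding of a quantum secret into $n$ shares, share $j$ given to party $j\in[n]$. A set $P\subseteq[n]$ is authorized if the secret can be recovered from the shares of the parties in $P$, and unauthorized if those shares contain no information about the secret. For $0\le z<t\le n$, a $((t,n;z))_q$ QSS scheme is one in which every set of at least $t$ parties is authorized, every set of at most $z$ parties is unauthorized, and the secret consists of $m$ qudits and the $j$-th share of $w_j$ qudits, all of dimension $q$. For an authorized set $A$, a fixed (a priori) portion of each share of a party in $A$ is sent to a combiner, which recovers the secret from these qudits; the communication cost is $\mathrm{CC}_n(A)=\sum_{j\in A}h_{j,A}$, where $h_{j,A}$ is the number of qudits sent by party $j$. *)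

(* Defs.v *)
From mathcomp Require Import all_boot all_order all_algebra all_field.
Set Implicit Arguments. Unset Strict Implicit. Unset Printing Implicit Defensive.
Import Order.TTheory GRing.Theory Num.Theory.
Local Open Scope ring_scope.

(* Operators on the Hilbert space C^T with computational basis T (a finType). *)
Definition op (T : finType) := T -> T -> algC.

Definition psd (T : finType) (r : op T) : Prop :=
  forall v : T -> algC, 0 <= \sum_(x : T) \sum_(y : T) (v x)^* * r x y * v y.

Definition density (T : finType) (r : op T) : Prop :=
  psd r /\ \sum_(x : T) r x x = 1.

(* A quantum channel given by Kraus operators K_l : C^T -> C^U, acting on
   operators supported on the basis states satisfying D (the input space is
   span{ |x> : D x }). *)
Definition apply_kraus (T U : finType) (k : nat) (K : 'I_k -> U -> T -> algC)
  (D : pred T) (r : op T) : op U :=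
  fun a b => \sum_(l < k) \sum_(x | D x) \sum_(y | D y) K l a x * r x y * (K l b y)^*.

Definition kraus_tp (T U : finType) (k : nat) (K : 'I_k -> U -> T -> algC)
  (D : pred T) : Prop :=
  forall x y, D x -> D y ->
    \sum_(l < k) \sum_(a : U) (K l a x)^* * K l a y = (x == y)%:R.

(* qudit positions of the shares: qudit i of party j, i < w j *)
Definition Qd (n : nat) (w : 'I_n -> nat) := {j : 'I_n & 'I_(w j)}.
(* computational basis of all shares: a value in [0,q) for each qudit *)
Definition conf (n q : nat) (w : 'I_n -> nat) := {ffun Qd w -> 'I_q}.
(* computational basis of the secret of m qudits *)
Definition sconf (m q : nat) := {ffun 'I_m -> 'I_q}.

Definition share_qudits (n : nat) (w : 'I_n -> nat) (P : {set 'I_n}) : {set Qd w} :=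
  [set i : Qd w | tag i \in P].

Definition glue (n q : nat) (w : 'I_n -> nat) (S : {set Qd w}) (x c : conf q w)
  : conf q w := [ffun i => if i \in S then x i else c i].

Definition zero_outside (n q : nat) (w : 'I_n -> nat) (S : {set Qd w})
  : pred (conf q w) := fun c => [forall i, (i \notin S) ==> (val (c i) == 0%N)].

(* Partial trace over the qudits outside S. The reduced operator is
   represented on full basis states; its value depends only on the
   coordinates in S. *)
Definition ptrace (n q : nat) (w : 'I_n -> nat) (S : {set Qd w}) (r : op (conf q w))
  : op (conf q w) :=
  fun x y => \sum_(c : conf q w | [forall i, (i \in S) ==> (val (c i) == 0%N)])
               r (glue S x c) (glue S y c).

Definition encode (n m q : nat) (w : 'I_n -> nat) (k : nat)
  (E : 'I_k -> conf q w -> sconf m q -> algC) (r : op (sconf m q)) : op (conf q w) :=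
  apply_kraus E predT r.

Definition recoverable_from (n m q : nat) (w : 'I_n -> nat) (k : nat)
  (E : 'I_k -> conf q w -> sconf m q -> algC) (S : {set Qd w}) : Prop :=
  exists (k' : nat) (Dec : 'I_k' -> sconf m q -> conf q w -> algC),
    kraus_tp Dec (zero_outside S) /\
    forall r : op (sconf m q), density r ->
      forall a b, apply_kraus Dec (zero_outside S) (ptrace S (encode E r)) a b = r a b.

Definition authorized (n m q : nat) (w : 'I_n -> nat) (k : nat)
  (E : 'I_k -> conf q w -> sconf m q -> algC) (P : {set 'I_n}) : Prop :=
  recoverable_from E (share_qudits w P).

Definition unauthorized (n m q : nat) (w : 'I_n -> nat) (k : nat)
  (E : 'I_k -> conf q w -> sconf m q -> algC) (P : {set 'I_n}) : Prop :=
  forall r1 r2 : op (sconf m q), density r1 -> density r2 ->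
    forall x y, ptrace (share_qudits w P) (encode E r1) x y
              = ptrace (share_qudits w P) (encode E r2) x y.

Definition is_QSS (n m q : nat) (w : 'I_n -> nat) (t z : nat) (k : nat)
  (E : 'I_k -> conf q w -> sconf m q -> algC) : Prop :=
  kraus_tp E predT /\
  (forall P : {set 'I_n}, (t <= #|P|)%N -> authorized E P) /\
  (forall P : {set 'I_n}, (#|P| <= z)%N -> unauthorized E P).

(* Main.v *)
Require Import Defs.
From mathcomp Require Import all_boot all_order all_algebra all_field.
From mathcomp Require Import ring.
Import Order.TTheory GRing.Theory Num.Theory.
Set Implicit Arguments. Unset Strict Implicit. Unset Printing Implicit Defensive.


Lemma card_ksub (T : finType) (A : {set T}) k :
  #|[set B : {set T} | (B \subset A) && (#|B| == k)]| = 'C(#|A|, k).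
Proof.
pose g (B' : {set {x | x \in A}}) : {set T} := val @: B'.
have gi : injective g := imset_inj val_inj.
have -> : [set B : {set T} | (B \subset A) && (#|B| == k)] =
          g @: [set B' : {set {x | x \in A}} | #|B'| == k].
  apply/setP => B; rewrite inE; apply/andP/imsetP.
  - case=> BA /eqP Bk.
    have EB : B = g [set x | val x \in B].
      apply/setP => y; apply/idP/imsetP.
        move=> yB; have yA : y \in A := subsetP BA y yB.
        by exists (exist _ y yA); rewrite // inE.
      by case=> x; rewrite inE => xB ->.
    exists [set x | val x \in B] => //.
    by rewrite inE -Bk {2}EB card_imset //; exact: val_inj.
  - move=> [B' HB' ->]; move: HB'; rewrite inE => /eqP <-; split.
      by apply/subsetP => y /imsetP[x _ ->]; exact: valP.
    by rewrite card_imset //; exact: val_inj.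
by rewrite card_imset // card_draws card_sig.
Qed.

Lemma average (n : nat) (X : finType) (tg : X -> 'I_n) (S : {set X}) (A : {set 'I_n})
  (m z : nat) :
  (forall i, i \in S -> tg i \in A) -> (z < #|A|)%N ->
  (forall Z : {set 'I_n}, Z \subset A -> #|Z| = z ->
     m <= #|S :\: (S :&: [set i | tg i \in Z])|) ->
  #|A| * m <= #|S| * (#|A| - z).
Proof.
move=> SA zA H.
set D := [set Z : {set 'I_n} | (Z \subset A) && (#|Z| == z)].
have cD : #|D| = 'C(#|A|, z) := card_ksub A z.
have L : #|D| * m <= \sum_(Z in D) #|S :\: (S :&: [set i | tg i \in Z])|.
  rewrite -sum_nat_const; apply: leq_sum => Z; rewrite inE => /andP[ZA /eqP Zz].
  exact: H.
have R : \sum_(Z in D) #|S :\: (S :&: [set i | tg i \in Z])| =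
         #|S| * 'C(#|A| - 1, z).
  transitivity (\sum_(Z in D) \sum_(i in S) (tg i \notin Z : nat)).
    apply: eq_bigr => Z _; rewrite -sum1_card [in RHS]big_mkcond big_mkcond /=.
    rewrite [LHS]big_mkcond; apply: eq_bigr => i _; rewrite !inE.
    by case: (i \in S); case: (tg i \in Z).
  rewrite exchange_big /= -sum_nat_const; apply: eq_bigr => i iS.
  have jA := SA i iS.
  transitivity (#|[set Z : {set 'I_n} | (Z \subset A :\ tg i) && (#|Z| == z)]|).
    rewrite -sum1_card [in RHS]big_mkcond /= [LHS]big_mkcond.
    apply: eq_bigr => Z _; rewrite !inE subsetD1.
    by case: (Z \subset A); case: (tg i \in Z); case: (#|Z| == z).
  by rewrite card_ksub (cardsD1 (tg i) A) jA add1n subn1.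
rewrite cD R in L.
have c0 : 0 < 'C(#|A| - 1, z) by rewrite bin_gt0; case: #|A| zA => // a; rewrite subn1.
rewrite -(leq_pmul2r c0).
have E : #|A| * m * 'C(#|A| - 1, z) = (#|A| - z) * ('C(#|A|, z) * m).
  by rewrite mulnA -mul_bin_down subn1; rewrite mulnAC.
rewrite E (mulnC #|S|) -mulnA leq_mul2l L orbT //.
Qed.

Local Open Scope ring_scope.

Definition sq (x : algC) := x * x^*.
Lemma sq_ge0 x : 0 <= sq x. Proof. exact: mul_conjC_ge0. Qed.
Lemma sq_conj x : sq x^* = sq x. Proof. by rewrite /sq conjCK mulrC. Qed.
Lemma sq_eq0 x : (sq x == 0) = (x == 0). Proof. exact: mul_conjC_eq0. Qed.
Lemma sqM x y : sq (x * y) = sq x * sq y.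
Proof. by rewrite /sq rmorphM /= mulrACA. Qed.
Lemma sq_nat n : sq n%:R = n%:R ^+ 2.
Proof. by rewrite /sq rmorph_nat expr2. Qed.

Lemma sq_sum (I : finType) (P : pred I) (a : I -> algC) :
  sq (\sum_(i | P i) a i) = \sum_(i | P i) \sum_(j | P j) a i * (a j)^*.
Proof.
rewrite /sq rmorph_sum mulr_suml; apply: eq_bigr => i _; by rewrite mulr_sumr.
Qed.

Lemma pairB (I J : finType) (P : pred I) (Q : pred J) (F : I * J -> algC) :
  \sum_(p | P p.1 && Q p.2) F p = \sum_(i | P i) \sum_(j | Q j) F (i, j).
Proof.
rewrite (pair_big_dep P (fun _ => Q) (fun i j => F (i, j))).
by apply: eq_bigr => -[].
Qed.

Lemma pairB1 (I J : finType) (Q : pred J) (F : I * J -> algC) :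
  \sum_(p | Q p.2) F p = \sum_i \sum_(j | Q j) F (i, j).
Proof.
rewrite (pair_big_dep xpredT (fun _ => Q) (fun i j => F (i, j))).
by apply: eq_bigr => -[].
Qed.

Lemma swap_purity (X Y : finType) (PX : pred X) (PY : pred Y) (F : X -> Y -> algC) :
  \sum_(x | PX x) \sum_(x' | PX x') sq (\sum_(y | PY y) F x y * (F x' y)^*) =
  \sum_(y | PY y) \sum_(y' | PY y') sq (\sum_(x | PX x) F x y * (F x y')^*).
Proof.
transitivity (\sum_(x | PX x) \sum_(x' | PX x') \sum_(y | PY y) \sum_(y' | PY y')
   F x y * (F x' y)^* * ((F x y')^* * F x' y')).
  apply: eq_bigr => x _; apply: eq_bigr => x' _; rewrite sq_sum.
  apply: eq_bigr => y _; apply: eq_bigr => y' _.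
  by rewrite rmorphM /= conjCK.
transitivity (\sum_(y | PY y) \sum_(y' | PY y') \sum_(x | PX x) \sum_(x' | PX x')
   F x y * (F x' y)^* * ((F x y')^* * F x' y')).
  under eq_bigr do rewrite exchange_big.
  rewrite exchange_big; apply: eq_bigr => y _.
  under eq_bigr do rewrite exchange_big.
  rewrite exchange_big; apply: eq_bigr => y' _.
  done.
apply: eq_bigr => y _; apply: eq_bigr => y' _; rewrite sq_sum.
apply: eq_bigr => x _; apply: eq_bigr => x' _.
rewrite rmorphM /= conjCK; ring.
Qed.

Lemma cs_sum (I : finType) (P : pred I) (b : I -> algC) :
  sq (\sum_(i | P i) b i) <= #|P|%:R * \sum_(i | P i) sq (b i).
Proof.
have E : \sum_(i | P i) \sum_(j | P j) sq (b i - b j) =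
  2%:R * (#|P|%:R * \sum_(i | P i) sq (b i)) - 2%:R * sq (\sum_(i | P i) b i).
  transitivity (\sum_(i | P i) \sum_(j | P j)
     ((sq (b i) + sq (b j)) - (b i * (b j)^* + b j * (b i)^*))).
    apply: eq_bigr => i _; apply: eq_bigr => j _.
    rewrite /sq rmorphB /=; ring.
  under eq_bigr do rewrite sumrB big_split /=.
  rewrite sumrB big_split /=.
  under [X in X + _ - _]eq_bigr do rewrite sumr_const.
  rewrite exchange_big /=.
  under [X in _ + X - _]eq_bigr do rewrite sumr_const.
  under [X in _ - X]eq_bigr do rewrite big_split /=.
  rewrite big_split /=.
  have -> : \sum_(i | P i) \sum_(j | P j) b j * (b i)^* = sq (\sum_(i | P i) b i).
    by rewrite sq_sum exchange_big.
  rewrite -sq_sum !sumrMnl; set u := (\sum_(i | P i) sq (b i)); set v := sq _.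
  rewrite -[u *+ _]mulr_natl.
  ring.
have H0 : 0 <= \sum_(i | P i) \sum_(j | P j) sq (b i - b j).
  by apply: sumr_ge0 => i _; apply: sumr_ge0 => j _; exact: sq_ge0.
rewrite E subr_ge0 in H0.
by rewrite -(ler_pM2l (_ : 0 < 2%:R)) ?ltr0n.
Qed.

Lemma single_le (I : finType) (P : pred I) (F : I -> algC) i :
  P i -> (forall j, P j -> 0 <= F j) -> F i <= \sum_(j | P j) F j.
Proof.
move=> Pi F0; rewrite (bigD1 i) //= lerDl; apply: sumr_ge0 => j /andP[Pj _]; exact: F0.
Qed.

Lemma block_cs (T U : finType) (PT : pred T) (PU : pred U)
  (B : T * U -> T * U -> algC) :
  \sum_(t | PT t) \sum_(t' | PT t') sq (\sum_(u | PU u) B (t, u) (t', u)) <=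
  #|PU|%:R * \sum_(y | PT y.1 && PU y.2) \sum_(y' | PT y'.1 && PU y'.2) sq (B y y').
Proof.
rewrite pairB.
under [X in _ <= _ * X]eq_bigr do under eq_bigr do rewrite pairB.
apply: (@le_trans _ _ (#|PU|%:R * \sum_(t | PT t) \sum_(u | PU u) \sum_(t' | PT t')
    sq (B (t, u) (t', u)))).
  rewrite mulr_sumr; apply: ler_sum => t _.
  rewrite exchange_big mulr_sumr; apply: ler_sum => t' _.
  exact: cs_sum.
rewrite ler_wpM2l ?ler0n //; apply: ler_sum => t _; apply: ler_sum => u Pu.
apply: ler_sum => t' _; apply: (single_le (P := PU) (F := fun u' => sq (B (t, u) (t', u')))) => //.
by move=> *; exact: sq_ge0.
Qed.

Lemma sum_delta (I : finType) (s : I) (G : I -> algC) :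
  \sum_s' (s == s')%:R * G s' = G s.
Proof.
rewrite (bigD1 s) //= eqxx mul1r big1 ?addr0 // => j /negbTE.
by rewrite eq_sym => ->; rewrite mul0r.
Qed.

Lemma sq_delta (b : bool) x : sq (b%:R * x) = b%:R * sq x.
Proof. by case: b; rewrite ?mul1r ?mul0r /sq ?mul0r. Qed.

Section StepA.
Variables (R Et Tt Ut : finType) (PE : pred Et) (PT : pred Tt) (PU : pred Ut)
  (Psi : R -> Et -> Tt -> Ut -> algC) (sigma : Tt -> Tt -> algC)
  (omega : Et -> Et -> algC).
Hypothesis HA1 : forall s s' t t', PT t -> PT t' ->
  \sum_(e | PE e) \sum_(u | PU u) Psi s e t u * (Psi s' e t' u)^* =
  (s == s')%:R * sigma t t'.
Hypothesis HA2 : forall s s' e e', PE e -> PE e' ->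
  \sum_(t | PT t) \sum_(u | PU u) Psi s e t u * (Psi s' e' t u)^* =
  (s == s')%:R * omega e e'.

Lemma stepA :
  #|R|%:R ^+ 2 * \sum_(t | PT t) \sum_(t' | PT t') sq (sigma t t') <=
  #|PU|%:R * (#|R|%:R * \sum_(e | PE e) \sum_(e' | PE e') sq (omega e e')).
Proof.
pose PX := fun x : R * Et => PE x.2.
pose PY := fun y : Tt * Ut => PT y.1 && PU y.2.
pose F := fun (x : R * Et) (y : Tt * Ut) => Psi x.1 x.2 y.1 y.2.
have LA : \sum_(x | PX x) \sum_(x' | PX x') sq (\sum_(y | PY y) F x y * (F x' y)^*)
   = #|R|%:R * \sum_(e | PE e) \sum_(e' | PE e') sq (omega e e').
  rewrite /PX pairB1.
  transitivity (\sum_(s : R) \sum_(e | PE e) \sum_(s' : R) \sum_(e' | PE e')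
      (s == s')%:R * sq (omega e e')).
    apply: eq_bigr => s _; apply: eq_bigr => e Pe; rewrite pairB1.
    apply: eq_bigr => s' _; apply: eq_bigr => e' Pe'.
    by rewrite /PY /F pairB /= HA2 // sq_delta.
  transitivity (\sum_(s : R) \sum_(s' : R) (s == s')%:R *
      \sum_(e | PE e) \sum_(e' | PE e') sq (omega e e')).
    apply: eq_bigr => s _; rewrite exchange_big /=; apply: eq_bigr => s' _.
    rewrite mulr_sumr; apply: eq_bigr => e _; by rewrite mulr_sumr.
  set W := \sum_(e | PE e) _.
  rewrite (eq_bigr (fun _ => W)); last by move=> s _; rewrite (sum_delta s (fun _ => W)).
  by rewrite sumr_const mulrC mulr_natr.
rewrite -LA swap_purity.
have := block_cs PT PU (fun y y' => \sum_(x | PX x) F x y * (F x y')^*).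
apply: le_trans; rewrite /= mulr_sumr; apply: ler_sum => t Pt.
rewrite mulr_sumr; apply: ler_sum => t' Pt'.
rewrite -sq_nat -sqM le_eqVlt; apply/orP; left; apply/eqP; congr sq.
rewrite exchange_big /PX pairB1 /F /=.
rewrite (eq_bigr (fun _ => sigma t t')); last first.
  by move=> s _; rewrite HA1 // eqxx mul1r.
by rewrite sumr_const mulr_natl.
Qed.
End StepA.

Lemma purity (R Et Tt Ut : finType) (PE : pred Et) (PT : pred Tt) (PU : pred Ut)
  (Psi : R -> Et -> Tt -> Ut -> algC) (sigma : Tt -> Tt -> algC)
  (omega : Et -> Et -> algC) (s0 : R) :
  (forall s s' t t', PT t -> PT t' ->
    \sum_(e | PE e) \sum_(u | PU u) Psi s e t u * (Psi s' e t' u)^* =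
    (s == s')%:R * sigma t t') ->
  (forall s s' e e', PE e -> PE e' ->
    \sum_(t | PT t) \sum_(u | PU u) Psi s e t u * (Psi s' e' t u)^* =
    (s == s')%:R * omega e e') ->
  \sum_(e | PE e) \sum_(t | PT t) \sum_(u | PU u) sq (Psi s0 e t u) != 0 ->
  (#|R| <= #|PU|)%N.
Proof.
move=> H1 H2 H0.
have A := stepA H1 H2.
have B := stepA (Psi := fun s t e u => Psi s e t u) H2 H1.
set Sg := \sum_(t | PT t) \sum_(t' | PT t') sq (sigma t t') in A B.
set Wo := \sum_(e | PE e) \sum_(e' | PE e') sq (omega e e') in A B.
have Sg0 : 0 <= Sg by do 2!(apply: sumr_ge0 => ? _); exact: sq_ge0.
have Wo0 : 0 <= Wo by do 2!(apply: sumr_ge0 => ? _); exact: sq_ge0.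
have Wne : Wo != 0.
  apply: contraNneq H0 => W0.
  have Z : forall e e', PE e -> PE e' -> omega e e' = 0.
    move=> e e' Pe Pe'; apply/eqP; rewrite -sq_eq0; apply/eqP.
    have Hn : forall i, PE i -> 0 <= \sum_(j | PE j) sq (omega i j).
      by move=> i _; apply: sumr_ge0 => j _; exact: sq_ge0.
    move: (psumr_eq0P Hn W0 Pe).
    move/psumr_eq0P; apply => // *; exact: sq_ge0.
  rewrite big1 // => e Pe.
  have := H2 s0 s0 e e Pe Pe; rewrite Z // mulr0 => E; exact: E.
have Wpos : 0 < Wo by rewrite lt_def Wne.
have R0 : (0 < #|R|)%N by apply/card_gt0P; exists s0.
have dpos : 0 < #|R|%:R :> algC by rewrite ltr0n.
have AB : #|R|%:R * #|R|%:R * (Sg + Wo) <= #|PU|%:R * #|R|%:R * (Sg + Wo).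
  have -> : #|R|%:R * #|R|%:R * (Sg + Wo) = #|R|%:R ^+ 2 * Sg + #|R|%:R ^+ 2 * Wo by ring.
  have -> : #|PU|%:R * #|R|%:R * (Sg + Wo) =
     #|PU|%:R * (#|R|%:R * Wo) + #|PU|%:R * (#|R|%:R * Sg) by ring.
  exact: lerD A B.
have SWpos : 0 < Sg + Wo by rewrite ltr_wpDl.
rewrite ler_pM2r // ler_pM2r // ler_nat in AB. exact: AB.
Qed.

Section Dens.
Variable X : finType.

Definition ub (s s' : X) (b : algC) (x : X) : algC :=
  (x == s)%:R + b * (x == s')%:R.

Lemma sum_delta_l (s : X) (h : X -> algC) : \sum_x (x == s)%:R * h x = h s.
Proof. by rewrite -(sum_delta s h); apply: eq_bigr => x _; rewrite eq_sym. Qed.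

Lemma sum_ub s s' b (h : X -> algC) :
  \sum_x ub s s' b x * h x = h s + b * h s'.
Proof.
rewrite /ub; under eq_bigr do rewrite mulrDl -mulrA.
by rewrite big_split /= sum_delta_l -mulr_sumr sum_delta_l.
Qed.

Lemma conj_ub s s' b x : (ub s s' b x)^* = ub s s' b^* x.
Proof. by rewrite /ub rmorphD rmorphM /= !rmorph_nat. Qed.

Lemma sum_ubc s s' b (h : X -> algC) :
  \sum_x (ub s s' b x)^* * h x = h s + b^* * h s'.
Proof. under eq_bigr do rewrite conj_ub. exact: sum_ub. Qed.

Definition r1 (c : algC) (u : X -> algC) : op X := fun x y => c * u x * (u y)^*.

Lemma r1_density c u : 0 <= c -> c * \sum_x u x * (u x)^* = 1 -> density (r1 c u).
Proof.
move=> c0 tr; split; last first.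
  by rewrite -tr mulr_sumr; apply: eq_bigr => x _; rewrite /r1 mulrA.
move=> v.
have -> : \sum_x \sum_y (v x)^* * r1 c u x y * v y =
          c * sq (\sum_x (v x)^* * u x).
  rewrite sq_sum mulr_sumr; apply: eq_bigr => x _; rewrite mulr_sumr.
  apply: eq_bigr => y _; rewrite /r1 rmorphM /= conjCK; ring.
by apply: mulr_ge0 => //; exact: sq_ge0.
Qed.

Lemma r1_sum c u (f g : X -> algC) :
  \sum_x \sum_y f x * r1 c u x y * g y =
  c * (\sum_x u x * f x) * (\sum_y (u y)^* * g y).
Proof.
rewrite mulr_sumr mulr_suml; apply: eq_bigr => x _.
rewrite mulr_sumr; apply: eq_bigr => y _; rewrite /r1; ring.
Qed.

Lemma r1_sum2 c u (L : X -> X -> algC) :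
  \sum_x \sum_y r1 c u x y * L x y =
  c * \sum_x u x * \sum_y (u y)^* * L x y.
Proof.
rewrite mulr_sumr; apply: eq_bigr => x _.
rewrite !mulr_sumr; apply: eq_bigr => y _; rewrite /r1; ring.
Qed.

Lemma ub_norm s s' b : s != s' ->
  \sum_x ub s s' b x * (ub s s' b x)^* = 1 + b * b^*.
Proof.
move=> ss; rewrite sum_ub !conj_ub /ub eqxx (negbTE ss) eq_sym (negbTE ss) eqxx.
rewrite /= mulr0 addr0 add0r mulr1; done.
Qed.

Lemma ub0_norm s : \sum_x ub s s 0 x * (ub s s 0 x)^* = 1.
Proof. by rewrite sum_ub !conj_ub /ub eqxx rmorph0 /= !mul0r !addr0. Qed.

Lemma dens0 s : density (r1 1 (ub s s 0)).
Proof. by apply: r1_density; rewrite ?ler01 // mul1r ub0_norm. Qed.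

Lemma dens_b s s' b : s != s' -> b * b^* = 1 -> density (r1 2^-1 (ub s s' b)).
Proof.
move=> ss bb; apply: r1_density; first by rewrite invr_ge0 ler0n.
by rewrite ub_norm // bb mulVf // pnatr_eq0.
Qed.

Lemma ii : 'i * 'i^* = 1 :> algC.
Proof. by rewrite conjCi mulrN -expr2 sqrCi opprK. Qed.

Lemma const_fun (L : X -> X -> algC) (c0 : algC) :
  (forall r, density r -> \sum_x \sum_y r x y * L x y = c0) ->
  forall s s', L s s' = (s == s')%:R * c0.
Proof.
move=> H s s'.
have Hd : forall t, L t t = c0.
  move=> t; rewrite -(H _ (dens0 t)) r1_sum2 mul1r sum_ub sum_ubc.
  by rewrite rmorph0 !mul0r !addr0.
case: (eqVneq s s') => [<-|ss]; first by rewrite Hd mul1r.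
rewrite mul0r.
have E1 := H _ (dens_b ss (_ : 1 * 1^* = 1)).
have E2 := H _ (dens_b ss ii).
rewrite r1_sum2 sum_ub !sum_ubc !Hd rmorph1 in E1.
rewrite r1_sum2 sum_ub !sum_ubc !Hd conjCi in E2.
have two : (2%:R : algC) != 0 by rewrite pnatr_eq0.
move: E1 => /(_ (mulr1 1)) /(congr1 (fun z => 2%:R * z)); rewrite mulrA divff // !mul1r => h1.
move: E2 => /(congr1 (fun z => 2%:R * z)); rewrite mulrA divff // !mul1r => h2.
set a := L s s' in h1 h2 *; set b := L s' s in h1 h2.
have F1 : a + b = 0.
  have -> : a + b = (c0 + a + (b + c0)) - 2%:R * c0 by ring.
  by rewrite h1 subrr.
have F2 : 'i * (b - a) = 0.
  have -> : 'i * (b - a) = (c0 + - 'i * a + 'i * (b + - 'i * c0)) - c0 - 'i * - 'i * c0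
    by ring.
  rewrite h2 -conjCi ii; ring.
move/eqP: F2; rewrite mulf_eq0 (negbTE (neq0Ci _)) /= subr_eq0 => /eqP ba.
move: F1; rewrite ba => /eqP; rewrite -mulr2n mulrn_eq0 /= => /eqP //.
Qed.

Lemma one1 : 1 * (1 : algC)^* = 1. Proof. by rewrite rmorph1 mulr1. Qed.

Lemma id_kraus (I : finType) (PI : pred I) (K : I -> X -> X -> algC) :
  (forall r, density r -> forall a b,
     \sum_(i | PI i) \sum_x \sum_y K i a x * r x y * (K i b y)^* = r a b) ->
  forall i, PI i -> forall a s s1, K i a s = (a == s)%:R * K i s1 s1.
Proof.
move=> H.
have Hs : forall s a, \sum_(i | PI i) sq (K i a s) = (a == s)%:R.
  move=> s a; have := H _ (dens0 s) a a.
  rewrite (eq_bigr (fun i => sq (K i a s))).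
    move=> ->; rewrite /r1 /ub mul0r addr0 mul1r rmorph_nat.
    by case: (a == s); rewrite ?mulr1 ?mulr0.
  move=> i _; rewrite r1_sum sum_ub sum_ubc rmorph0 !mul0r !addr0 mul1r.
  by rewrite /sq.
have Off : forall i, PI i -> forall a s, a != s -> K i a s = 0.
  move=> i Pi a s ne; apply/eqP; rewrite -sq_eq0; apply/eqP.
  have := Hs s a; rewrite (negbTE ne) => h.
  exact: (psumr_eq0P (fun j _ => sq_ge0 _) h Pi).
have two : (2%:R : algC) != 0 by rewrite pnatr_eq0.
have Dg : forall s s', s != s' -> \sum_(i | PI i) K i s s * (K i s' s')^* = 1.
  move=> s s' ss; have := H _ (dens_b ss one1) s s'.
  rewrite (eq_bigr (fun i => 2^-1 * (K i s s * (K i s' s')^*))).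
    rewrite -mulr_sumr /r1 /ub eqxx (negbTE ss) eq_sym (negbTE ss) /=.
    rewrite eqxx mulr0 addr0 add0r !mul1r mulr1 rmorph1 mulr1 => h.
    by apply: (mulfI (invr_neq0 two)); rewrite h mulr1.
  move=> i Pi; rewrite r1_sum sum_ub sum_ubc rmorph1 !mul1r.
  rewrite (Off i Pi s s') // (Off i Pi s' s) 1?eq_sym //.
  by rewrite rmorph0 addr0 add0r mulrA.
move=> i Pi a s s1.
case: (eqVneq a s) => [<-|ne]; last by rewrite Off // mul0r.
rewrite mul1r; case: (eqVneq a s1) => [->//|ne1].
have Z : \sum_(j | PI j) sq (K j a a - K j s1 s1) = 0.
  transitivity (\sum_(j | PI j) sq (K j a a) + \sum_(j | PI j) sq (K j s1 s1)
     - (\sum_(j | PI j) K j a a * (K j s1 s1)^* + \sum_(j | PI j) K j s1 s1 * (K j a a)^*)).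
    rewrite -!big_split /= -sumrB; apply: eq_bigr => j _; rewrite /sq rmorphB /=; ring.
  by rewrite !Hs !eqxx Dg // Dg 1?eq_sym // subrr.
apply/eqP; rewrite -subr_eq0 -sq_eq0; apply/eqP.
exact: (psumr_eq0P (fun j _ => sq_ge0 _) Z Pi).
Qed.
End Dens.

Section Q.
Variables (n q' : nat) (w : 'I_n -> nat).
Local Notation C := (conf q'.+1 w).
Definition z0 : C := [ffun => ord0].

Lemma glueE S (x c : C) i : glue S x c i = if i \in S then x i else c i.
Proof. by rewrite ffunE. Qed.

Lemma split_sum (A B : {set Qd w}) (F : C -> algC) : [disjoint A & B] ->
  \sum_(x | zero_outside (A :|: B) x) F x =
  \sum_(a | zero_outside A a) \sum_(b | zero_outside B b) F (glue A a b).
Proof.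
move=> dAB.
rewrite (reindex_onto (fun p : C * C => glue A p.1 p.2)
   (fun x => (glue A x z0, glue A z0 x))) /=; last first.
  by move=> x _; apply/ffunP => i; rewrite !glueE; case: (i \in A).
rewrite pair_big_dep; apply: eq_bigl => -[a b] /=.
rewrite xpair_eqE; apply/idP/idP.
- case/and3P => /forallP H1 /eqP Ha /eqP Hb.
  apply/andP; split; apply/forallP => i; apply/implyP => iO.
  + by rewrite -Ha glueE (negbTE iO) ffunE.
  + case iA: (i \in A).
      by rewrite -Hb glueE iA ffunE.
    by have := H1 i; rewrite in_setU iA (negbTE iO) /= glueE iA.
- case/andP => /forallP Za /forallP Zb; apply/and3P; split.
  + apply/forallP => i; apply/implyP; rewrite in_setU negb_or => /andP[iA iB].
    by rewrite glueE (negbTE iA); exact: (implyP (Zb i) iB).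
  + apply/eqP/ffunP => i; rewrite !glueE; case iA: (i \in A) => //.
    apply: val_inj; rewrite ffunE /=; symmetry; apply/eqP; apply: (implyP (Za i)).
    by rewrite iA.
  + apply/eqP/ffunP => i; rewrite !glueE; case iA: (i \in A) => //.
    apply: val_inj; rewrite ffunE /=; symmetry; apply/eqP; apply: (implyP (Zb i)).
    by rewrite (disjointFr dAB iA).
Qed.

Lemma ZOn (V : {set Qd w}) (c : C) :
  [forall i, (i \in V) ==> (val (c i) == 0%N)] = zero_outside (~: V) c.
Proof. by apply: eq_forallb => i; rewrite in_setC negbK. Qed.

Lemma ZOT (c : C) : zero_outside [set: Qd w] c.
Proof. by apply/forallP => i; rewrite in_setT. Qed.

Lemma reglue (T V : {set Qd w}) (t : C) (F : C -> algC) : T \subset V ->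
  \sum_(y | zero_outside (~: T) y) F (glue T t y) =
  \sum_(u | zero_outside (V :\: T) u) \sum_(c | zero_outside (~: V) c)
     F (glue V (glue T t u) c).
Proof.
move=> TV.
have -> : ~: T = (V :\: T) :|: ~: V.
  apply/setP => i; rewrite !inE; case iT: (i \in T) => /=.
    by rewrite (subsetP TV _ iT).
  by case: (i \in V).
rewrite split_sum; last first.
  by rewrite -setI_eq0; apply/eqP/setP => i; rewrite !inE; case: (i \in V); rewrite ?andbF.
apply: eq_bigr => u _; apply: eq_bigr => c _; congr F.
apply/ffunP => i; rewrite !glueE !inE.
case iT: (i \in T); first by rewrite (subsetP TV _ iT).
by case: (i \in V).
Qed.


Lemma reglue2 (T V : {set Qd w}) (G : C -> algC) : T \subset V ->
  \sum_(y | zero_outside (~: T) y) G y =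
  \sum_(u | zero_outside (V :\: T) u) \sum_(c | zero_outside (~: V) c)
     G (glue (V :\: T) u c).
Proof.
move=> TV.
have -> : ~: T = (V :\: T) :|: ~: V.
  apply/setP => i; rewrite !inE; case iT: (i \in T) => /=.
    by rewrite (subsetP TV _ iT).
  by case: (i \in V).
rewrite split_sum //.
by rewrite -setI_eq0; apply/eqP/setP => i; rewrite !inE; case: (i \in V); rewrite ?andbF.
Qed.

Lemma glue_assoc (T V : {set Qd w}) (t u c : C) : T \subset V ->
  glue T t (glue (V :\: T) u c) = glue V (glue T t u) c.
Proof.
move=> TV; apply/ffunP => i; rewrite !glueE !inE.
case iT: (i \in T); first by rewrite (subsetP TV _ iT).
by case: (i \in V).
Qed.

End Q.

Lemma swap22 (A B C D : finType) (PA : pred A) (PB : pred B) (PC : pred C) (PD : pred D)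
  (F : A -> B -> C -> D -> algC) :
  \sum_(a | PA a) \sum_(b | PB b) \sum_(c | PC c) \sum_(d | PD d) F a b c d =
  \sum_(c | PC c) \sum_(d | PD d) \sum_(a | PA a) \sum_(b | PB b) F a b c d.
Proof.
under eq_bigr => a _ do rewrite exchange_big.
under eq_bigr => a _ do under eq_bigr => c _ do rewrite exchange_big.
rewrite exchange_big; apply: eq_bigr => c _; by rewrite exchange_big.
Qed.

Lemma pairB2 (I J : finType) (P : pred I) (F : I * J -> algC) :
  \sum_(p | P p.1) F p = \sum_(i | P i) \sum_j F (i, j).
Proof.
rewrite (pair_big_dep P (fun _ => xpredT) (fun i j => F (i, j))).
by apply: eq_big => [[i j]|[i j]] //=; rewrite andbT.
Qed.

Section Key.
Variables (n m q' k : nat) (w : 'I_n -> nat).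
Variable E : 'I_k -> conf q'.+1 w -> sconf m q'.+1 -> algC.
Local Notation C := (conf q'.+1 w).
Local Notation R := (sconf m q'.+1).
Definition s0 : R := [ffun => ord0].

Definition Lz (Z : {set Qd w}) (x y : C) (s s' : R) : algC :=
  \sum_(c | zero_outside (~: Z) c) \sum_l E l (glue Z x c) s * (E l (glue Z y c) s')^*.

Lemma enc_expand (Z : {set Qd w}) r x y :
  ptrace Z (encode E r) x y = \sum_s \sum_s' r s s' * Lz Z x y s s'.
Proof.
rewrite /ptrace /encode /apply_kraus /Lz.
under eq_bigl do rewrite ZOn.
transitivity (\sum_(c | zero_outside (~: Z) c) \sum_l \sum_s \sum_s'
   r s s' * (E l (glue Z x c) s * (E l (glue Z y c) s')^*)).
  apply: eq_bigr => c _; apply: eq_bigr => l _.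
  apply: eq_big => [//|s _]; apply: eq_big => [//|s' _]; ring.
under eq_bigr => c _ do rewrite exchange_big.
under eq_bigr => c _ do under eq_bigr => s _ do rewrite exchange_big.
rewrite exchange_big; apply: eq_bigr => s _.
rewrite exchange_big; apply: eq_bigr => s' _.
rewrite mulr_sumr; apply: eq_bigr => c _; by rewrite mulr_sumr.
Qed.


Lemma unauth_L (Z : {set Qd w}) :
  (forall r1 r2, density r1 -> density r2 -> forall x y,
     ptrace Z (encode E r1) x y = ptrace Z (encode E r2) x y) ->
  forall x y s s', Lz Z x y s s' = (s == s')%:R * Lz Z x y s0 s0.
Proof.
move=> H x y.
have K := @const_fun _ (Lz Z x y) (ptrace Z (encode E (r1 1 (ub s0 s0 0))) x y).
have K' : forall s s', Lz Z x y s s' = (s == s')%:R * ptrace Z (encode E (r1 1 (ub s0 s0 0))) x y.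
  apply: K => r dr; rewrite -enc_expand; exact: H _ _ dr (dens0 s0) x y.
by move=> s s'; rewrite K' (K' s0 s0) eqxx mul1r.
Qed.


Lemma sum_delta_P (T : finType) (P : pred T) (x : T) (G : T -> algC) :
  P x -> \sum_(y | P y) (x == y)%:R * G y = G x.
Proof.
move=> Px; rewrite (bigD1 x) //= eqxx mul1r big1 ?addr0 // => y /andP[_ /negbTE].
by rewrite eq_sym => ->; rewrite mul0r.
Qed.

Lemma rec_omega (S : {set Qd w}) : recoverable_from E S ->
  exists om : C * 'I_k -> C * 'I_k -> algC,
  forall s s' (e e' : C * 'I_k), zero_outside (~: S) e.1 -> zero_outside (~: S) e'.1 ->
   \sum_(x | zero_outside S x) E e.2 (glue S x e.1) s * (E e'.2 (glue S x e'.1) s')^*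
     = (s == s')%:R * om e e'.
Proof.
case=> k' [Dec [Dtp Drec]].
pose Kc (p : 'I_k' * (C * 'I_k)) (a s : R) :=
  \sum_(x | zero_outside S x) Dec p.1 a x * E p.2.2 (glue S x p.2.1) s.
have Hid : forall r, density r -> forall a b,
   \sum_(p | zero_outside (~: S) p.2.1) \sum_s \sum_s' Kc p a s * r s s' * (Kc p b s')^*
   = r a b.
  move=> r dr a b; rewrite -(Drec r dr a b) /apply_kraus.
  rewrite (pairB1 (fun e : C * 'I_k => zero_outside (~: S) e.1)).
  apply: eq_bigr => j _.
  rewrite pairB2.
  transitivity (\sum_(c | zero_outside (~: S) c) \sum_l \sum_s \sum_s'
     \sum_(x | zero_outside S x) \sum_(y | zero_outside S y)
     Dec j a x * E l (glue S x c) s * r s s' * ((E l (glue S y c) s')^* * (Dec j b y)^*)).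
    apply: eq_bigr => c _; apply: eq_bigr => l _; apply: eq_bigr => s _.
    apply: eq_bigr => s' _; rewrite /Kc /= mulr_suml rmorph_sum mulr_suml.
    apply: eq_bigr => x _; rewrite mulr_sumr; apply: eq_bigr => y _.
    rewrite rmorphM /=; ring.
  symmetry.
  transitivity (\sum_(x | zero_outside S x) \sum_(y | zero_outside S y) \sum_s \sum_s'
     \sum_(c | zero_outside (~: S) c) \sum_l
     Dec j a x * E l (glue S x c) s * r s s' * ((E l (glue S y c) s')^* * (Dec j b y)^*)).
    apply: eq_bigr => x _; apply: eq_bigr => y _.
    rewrite enc_expand mulr_sumr mulr_suml; apply: eq_bigr => s _.
    rewrite mulr_sumr mulr_suml; apply: eq_bigr => s' _.
    rewrite /Lz mulr_sumr mulr_sumr mulr_suml; apply: eq_bigr => c _.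
    rewrite mulr_sumr mulr_sumr mulr_suml; apply: eq_bigr => l _.
    ring.
  rewrite swap22.
  under eq_bigr do under eq_bigr do rewrite swap22.
  by rewrite swap22.
have Kid := id_kraus Hid.
exists (fun e e' => \sum_j Kc (j, e) s0 s0 * (Kc (j, e') s0 s0)^*).
move=> s s' e e' Pe Pe'.
transitivity (\sum_j \sum_a Kc (j, e) a s * (Kc (j, e') a s')^*); last first.
  rewrite mulr_sumr; apply: eq_bigr => j _.
  rewrite (eq_bigr (fun a => (a == s)%:R * ((a == s')%:R *
       (Kc (j, e) s0 s0 * (Kc (j, e') s0 s0)^*)))).
    by rewrite sum_delta_l.
  move=> a _; rewrite (Kid (j, e) Pe a s s0) (Kid (j, e') Pe' a s' s0).
  rewrite rmorphM /= rmorph_nat; ring.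
symmetry.
transitivity (\sum_j \sum_a \sum_(x | zero_outside S x) \sum_(y | zero_outside S y)
   (Dec j a x * (Dec j a y)^*) * (E e.2 (glue S x e.1) s * (E e'.2 (glue S y e'.1) s')^*)).
  apply: eq_bigr => j _; apply: eq_bigr => a _.
  rewrite /Kc /= rmorph_sum mulr_suml; apply: eq_bigr => x _.
  rewrite mulr_sumr; apply: eq_bigr => y _; rewrite rmorphM /=; ring.
rewrite swap22; apply: eq_bigr => x Px.
rewrite (eq_bigr (fun y => (x == y)%:R * (E e.2 (glue S x e.1) s * (E e'.2 (glue S y e'.1) s')^*))).
  by rewrite sum_delta_P.
move=> y Py; under eq_bigr do rewrite -mulr_suml. rewrite -mulr_suml; congr (_ * _).
under eq_bigr do under eq_bigr do rewrite -[Dec _ _ x]conjCK -rmorphM mulrC.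
under eq_bigr do rewrite -rmorph_sum.
rewrite -rmorph_sum /=.
have -> : \sum_j \sum_a Dec j a y * (Dec j a x)^* = (x == y)%:R.
  by rewrite -(Dtp x y Px Py); apply: eq_bigr => j _; apply: eq_bigr => a _; rewrite mulrC.
by rewrite rmorph_nat.
Qed.

Lemma key (S Z : {set Qd w}) : (1 < q'.+1)%N ->
  kraus_tp E predT -> recoverable_from E S ->
  (forall r1 r2, density r1 -> density r2 -> forall x y,
     ptrace Z (encode E r1) x y = ptrace Z (encode E r2) x y) ->
  (m <= #|S :\: (S :&: Z)|)%N.
Proof.
move=> q1 Etp Rec Un.
set T := S :&: Z; set U := S :\: T.
have TS : T \subset S by exact: subsetIl.
have TZ : T \subset Z by exact: subsetIr.
have [om Hom] := rec_omega Rec.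
have HL := unauth_L Un.
pose Psi (s : R) (e : C * 'I_k) (t u : C) := E e.2 (glue S (glue T t u) e.1) s.
pose sig (t t' : C) := \sum_(g | zero_outside (Z :\: T) g)
   Lz Z (glue T t g) (glue T t' g) s0 s0.
have dTU : [disjoint T & U].
  by rewrite -setI_eq0; apply/eqP/setP => i; rewrite !inE; case: (i \in S); case: (i \in Z).
have SU : T :|: U = S.
  by apply/setP => i; rewrite !inE; case: (i \in S); case: (i \in Z).
have H1 : forall s s' t t', zero_outside T t -> zero_outside T t' ->
   \sum_(e | zero_outside (~: S) e.1) \sum_(u | zero_outside U u)
      Psi s e t u * (Psi s' e t' u)^* = (s == s')%:R * sig t t'.
  move=> s s' t t' _ _; rewrite pairB2.
  transitivity (\sum_l \sum_(y | zero_outside (~: T) y)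
     E l (glue T t y) s * (E l (glue T t' y) s')^*).
    rewrite exchange_big /=; apply: eq_bigr => l _.
    rewrite (reglue2 _ TS) exchange_big /=.
    by apply: eq_bigr => u _; apply: eq_bigr => c _; rewrite !glue_assoc.
  rewrite exchange_big /= (reglue2 _ TZ) mulr_sumr; apply: eq_bigr => g _.
  rewrite -HL /Lz; apply: eq_bigr => c _; apply: eq_bigr => l _.
  by rewrite !glue_assoc.
have H2 : forall s s' e e', zero_outside (~: S) e.1 -> zero_outside (~: S) e'.1 ->
   \sum_(t | zero_outside T t) \sum_(u | zero_outside U u)
      Psi s e t u * (Psi s' e' t u)^* = (s == s')%:R * om e e'.
  move=> s s' e e' Pe Pe'.
  have SP := split_sum (A := T) (B := U) (fun x => E e.2 (glue S x e.1) s * (E e'.2 (glue S x e'.1) s')^*) dTU.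
  by rewrite SU in SP; rewrite -Hom // SP.
have H0 : \sum_(e | zero_outside (~: S) e.1) \sum_(t | zero_outside T t)
     \sum_(u | zero_outside U u) sq (Psi s0 e t u) != 0.
  suff -> : \sum_(e | zero_outside (~: S) e.1) \sum_(t | zero_outside T t)
     \sum_(u | zero_outside U u) sq (Psi s0 e t u) = 1 by exact: oner_neq0.
  rewrite pairB2.
  transitivity (\sum_(c | zero_outside (~: S) c) \sum_l
     \sum_(x | zero_outside S x) sq (E l (glue S x c) s0)).
    apply: eq_bigr => c _; apply: eq_bigr => l _.
    have SP := split_sum (A := T) (B := U) (fun x => sq (E l (glue S x c) s0)) dTU.
    by rewrite SU in SP; rewrite SP.
  rewrite exchange_big /=.
  under eq_bigr do rewrite exchange_big /=.
  transitivity (\sum_l \sum_(y : C) sq (E l y s0)).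
    apply: eq_bigr => l _.
    have dS : [disjoint S & ~: S] by rewrite -setI_eq0 setICr.
    have SP := split_sum (A := S) (B := ~: S) (fun y => sq (E l y s0)) dS.
    rewrite setUCr in SP; rewrite -SP.
    by apply: eq_bigl => y; rewrite ZOT.
  have := Etp s0 s0 isT isT; rewrite eqxx => h; rewrite -[RHS]/(true%:R) -h; apply: eq_bigr => l _; apply: eq_big => [//|y _].
  by rewrite /sq mulrC.
have := purity H1 H2 H0.
rewrite card_ffun => Hc.
rewrite !card_ord in Hc.
rewrite -(leq_exp2l _ _ q1); apply: (leq_trans Hc).
pose f (c : C) : {ffun {i : Qd w | i \in U} -> 'I_q'.+1} := [ffun j => c (val j)].
have := leq_card_in f (zero_outside U) _.
  rewrite card_ffun card_ord card_sig; apply.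
move=> c1 c2 Z1 Z2 /ffunP H; apply/ffunP => i; case iU: (i \in U).
  by have := H (exist _ i iU); rewrite !ffunE.
apply: val_inj; move: Z1 Z2; rewrite -!topredE /= => /forallP/(_ i) Z1 /forallP/(_ i) Z2.
rewrite iU /= in Z1 Z2; by rewrite (eqP Z1) (eqP Z2).
Qed.

End Key.

Unset Implicit Arguments.

(* A: an authorized set; S: the qudits (a fixed portion of the shares of the
   parties in A) sent to the combiner, which recovers the secret from them;
   CC_n(A) = sum_j h_{j,A} = #|S|. *)
Theorem theorem5 (n m q : nat) (w : 'I_n -> nat) (t z : nat) (k : nat)
  (E : 'I_k -> conf q w -> sconf m q -> algC) :
  (2 <= q)%N -> (z < t)%N -> (t <= n)%N -> is_QSS t z E ->
  forall (A : {set 'I_n}) (S : {set Qd w}),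
    S \subset share_qudits w A -> recoverable_from E S ->
    (#|A| * m)%:R / (#|A| - z)%:R <= (#|S|)%:R :> rat.
Proof.
case: q E => [|q'] E q2 zt tn [Etp [Auth Unauth]] A S SA Rec; first by [].
have q1 : (1 < q'.+1)%N := q2.
case: (leqP #|A| z) => Az.
  have -> : (#|A| - z)%N = 0%N by apply/eqP; rewrite subn_eq0.
  by rewrite invr0 mulr0 ler0n.
have Hn : (#|A| * m <= #|S| * (#|A| - z))%N.
  apply: (average (tg := fun i : Qd w => tag i)).
  - by move=> i iS; have := subsetP SA i iS; rewrite inE.
  - exact: Az.
  - move=> Z ZA Zz.
    have Zle : (#|Z| <= z)%N by rewrite Zz.
    exact: (key (S := S) (Z := share_qudits w Z) q1 Etp Rec (Unauth Z Zle)).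
by rewrite ler_pdivrMr ?ltr0n ?subn_gt0 // -natrM ler_nat.
Qed.
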